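(* Let $n\ge 2$ and let $G=(V,A,s,t)$ be a doubly-rooted digraph with $|V|=n$, edges enumerated $A=\{a_1,\dots,a_{4n-1}\}$, and $B\subseteq A$ with $|B|\le 3$. Let $A^*=A\cup\{a_0,a_{4n}\}$, where $a_0$ is a new edge with $a_0^+=s$ and $a_{4n}$ is a new edge with $a_{4n}^-=t$ (their other endpoints being a new vertex $r$). For any $a\in A$ that is not a loop, \[S(G,B)=\sum_{c\in A^*:\,c^+=a^-}S(G_{a,c},B_{a,c})-\sum_{d\in A^*:\,d^-=a^+}S(G^{a,d},B^{a,d}),\] where all digraphs are given the enumerations described below.
   Context: For a doubly-rooted digraph $H$ with edges indexed by $\{1,\dots,k\}$ and $B'\subseteq A(H)$: $M(B')$ is the set of indices of edges in $B'$; $P(H)$ is the set of $\sigma\in\mathfrak{S}_k$ such that $(e_{\sigma(1)},\dots,e_{\sigma(k)})$ (with $e_j$ the edge of index $j$) is a directed Eulerian trail from the first root to the second root; for $M=\{j_1<\dots<j_\ell\}$, $\sigma_M\in\mathfrak{S}_\ell$ is $\sigma_M(g)=|\{h:\sigma(j_h)\le\sigma(j_g)\}|$; $S(H,B')=\sum_{\sigma\in P(H)}\mathrm{sgn}(\sigma)\mathrm{sgn}(\sigma_{M(B')})$. Edge $a$ has source $a^-$, target $a^+$; loops and multiple edges allowed. Constructions. For $c\in A$ with $c^+=a^-$: $G_{a,c}$ has vertex set $V$, roots $(s,t)$, and edge set obtained from $A$ by replacing $a$ with a loop $\overline{a}$ at $a^+$ (given the index of $a$) and $c$ with an edge $c_a$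 from $c^-$ to $a^+$ (given the index of $c$). For $d\in A$ with $d^-=a^+$: $G^{a,d}$ has vertex set $V$, roots $(s,t)$, and edge set obtained from $A$ by replacing $a$ with a loop $\overline{a}$ at $a^+$ (index of $a$) and $d$ with an edge $d^a$ from $a^-$ to $d^+$ (index of $d$). If $c=a_0$ (possible only when $s=a^-$), $G_{a,a_0}$ has vertex set $V$, edge set $(A\setminus\{a\})\cup\{\overline{a}\}$ ($\overline{a}$ a loop at $a^+$ with the index of $a$) and roots $(a^+,t)$. If $d=a_{4n}$ (possible only when $t=a^+$), $G^{a,a_{4n}}$ has vertex set $V$, edge set $(A\setminus\{a\})\cup\{\overline{a}\}$ and roots $(s,a^-)$. In all cases $B_{a,c}$ (resp. $B^{a,d}$) is obtained from $B$ by replacing $a$ by $\overline{a}$ and $c$ by $c_a$ (resp. $d$ by $d^a$) whenever these lie in $B$; thus the index sets of the distinguished edges are unchanged. *)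

(* Defs.v *)
From mathcomp Require Import all_boot all_order all_algebra all_fingroup.
Set Implicit Arguments. Unset Strict Implicit. Unset Printing Implicit Defensive.
Import GRing.Theory.

(* A doubly-rooted digraph with vertex set V (a finType) and k edges, the
   edges being identified with their indices 'I_k (indices 0..k-1 instead of
   1..k; a uniform shift, irrelevant for signs).  Edge j has source src j and
   target tgt j; loops and multiple edges are allowed. *)

Section Defs.
Variables (V : finType) (k : nat).

Definition sgn_perm (sigma : 'S_k) : int := ((-1) ^+ odd_perm sigma)%R.

Definition inversions (w : seq nat) : nat :=
  \sum_(i < size w) \sum_(j < size w) ((i < j) && (nth 0 w j < nth 0 w i)).
Definition sgn_seq (w : seq nat) : int := ((-1) ^+ inversions w)%R.

Definition index_seq (B : {set 'I_k}) : seq 'I_k := [seq j <- enum 'I_k | j \in B].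

Definition sigma_M (sigma : 'S_k) (B : {set 'I_k}) : seq nat :=
  [seq #|[set h in B | sigma h <= sigma g]| | g <- index_seq B].

Fixpoint walk (src tgt : 'I_k -> V) (v : V) (es : seq 'I_k) (w : V) : bool :=
  match es with
  | [::] => v == w
  | e :: es' => (src e == v) && walk src tgt (tgt e) es' w
  end.

Definition eulerian_trail (src tgt : 'I_k -> V) (s t : V) (sigma : 'S_k) : bool :=
  walk src tgt s [seq sigma i | i <- enum 'I_k] t.

Definition Ptrails (src tgt : 'I_k -> V) (s t : V) : {set 'S_k} :=
  [set sigma : 'S_k | eulerian_trail src tgt s t sigma].

Definition Ssum (src tgt : 'I_k -> V) (s t : V) (B : {set 'I_k}) : int :=
  (\sum_(sigma in Ptrails src tgt s t) sgn_perm sigma * sgn_seq (sigma_M sigma B))%R.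

(* Constructions.  In all of them the vertex set is V and the distinguished
   index set is unchanged (B_{a,c}, B^{a,d} have the same index set as B). *)

(* G_{a,c}, c in A, c^+ = a^- : a -> loop abar at a^+, c -> c_a : c^- -> a^+ *)
Definition src_low (src tgt : 'I_k -> V) (a c : 'I_k) (j : 'I_k) : V :=
  if j == a then tgt a else src j.
Definition tgt_low (src tgt : 'I_k -> V) (a c : 'I_k) (j : 'I_k) : V :=
  if j == a then tgt a else if j == c then tgt a else tgt j.

(* G^{a,d}, d in A, d^- = a^+ : a -> loop abar at a^+, d -> d^a : a^- -> d^+ *)
Definition src_up (src tgt : 'I_k -> V) (a d : 'I_k) (j : 'I_k) : V :=
  if j == a then tgt a else if j == d then src a else src j.
Definition tgt_up (src tgt : 'I_k -> V) (a d : 'I_k) (j : 'I_k) : V :=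
  if j == a then tgt a else tgt j.

(* G_{a,a_0} and G^{a,a_{4n}}: a -> loop abar at a^+, all else unchanged
   (roots change: (a^+, t) resp. (s, a^-)) *)
Definition src_loop (src tgt : 'I_k -> V) (a : 'I_k) (j : 'I_k) : V :=
  if j == a then tgt a else src j.
Definition tgt_loop (src tgt : 'I_k -> V) (a : 'I_k) (j : 'I_k) : V :=
  if j == a then tgt a else tgt j.

End Defs.

(* Main.v *)
Require Import Defs.
From mathcomp Require Import all_boot all_order all_algebra all_fingroup.
From mathcomp Require Import zify.
Import GRing.Theory.
Set Implicit Arguments. Unset Strict Implicit. Unset Printing Implicit Defensive.

Section Pf.
Variables (V : finType) (k : nat) (src tgt : 'I_k -> V) (s t : V) (a : 'I_k).

Definition Lf (tg : 'I_k -> V) (x : V) (w : seq 'I_k) (j : nat) : V :=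
  if j is i.+1 then tg (nth a w i) else x.
Definition Rf (sr : 'I_k -> V) (y : V) (w : seq 'I_k) (j : nat) : V :=
  if j == size w then y else sr (nth a w j).

Lemma all_iotaS (P : pred nat) m n : all P (iota m.+1 n) = all (fun j => P j.+1) (iota m n).
Proof. by elim: n m => //= n IH m; rewrite IH. Qed.

Lemma walk_all sr tg x w y : walk sr tg x w y =
  all (fun j => Lf tg x w j == Rf sr y w j) (iota 0 (size w).+1).
Proof.
elim: w x => [|e w IH] x; first by rewrite /= /Lf /Rf /= andbT.
rewrite [walk _ _ _ _ _]/= IH [size (_ :: _)]/=.
rewrite -[iota 0 (size w).+2]/(0 :: iota 1 (size w).+1) [all _ (0 :: _)]/= all_iotaS.
congr andb; first by rewrite /Lf /Rf /= eq_sym.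
by apply: eq_all => j; rewrite /Lf /Rf /= eqSS; case: j.
Qed.

Lemma all_if (s0 : seq nat) j X (Q : nat -> bool) :
  all (fun x => if x == j then X else Q x) s0 =
  ((j \in s0) ==> X) && all (fun x => (x == j) || Q x) s0.
Proof.
elim: s0 => //= x s0 IH; rewrite IH in_cons; clear IH.
case: (x =P j) => [->|hx] /=; first by rewrite eqxx; case: X; rewrite /= ?implybT.
rewrite (_ : (j == x) = false); last by apply/eqP => h; apply: hx.
by case: X (Q x) (j \in s0) => [] [] [].
Qed.

Variable sigma : 'S_k.
Definition w := [seq sigma i | i <- enum 'I_k].
Lemma size_w : size w = k. Proof. by rewrite size_map size_enum_ord. Qed.
Definition e i := nth a w i.
Lemma eE (i : 'I_k) : e i = sigma i.
Proof. by rewrite /e /w (nth_map a) ?size_enum_ord // nth_ord_enum. Qed.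
Definition p : nat := (sigma^-1)%g a.
Lemma ep : e p = a. Proof. by rewrite (eE ((sigma^-1)%g a)) permKV. Qed.
Lemma p_lt : p < k. Proof. exact: ltn_ord. Qed.
Lemma e_inj i i' : i < k -> i' < k -> (e i == e i') = (i == i').
Proof.
move=> hi hi'; rewrite (eE (Ordinal hi)) (eE (Ordinal hi')).
by rewrite (inj_eq perm_inj).
Qed.
Lemma ea i : i < k -> (e i == a) = (i == p).
Proof. by move=> hi; rewrite -{1}ep e_inj // p_lt. Qed.

Definition L j := Lf tgt s w j.
Definition R j := Rf src t w j.
Lemma RE j : R j = if j == k then t else src (e j).
Proof. by rewrite /R /Rf size_w. Qed.

Lemma walkG : walk src tgt s w t = all (fun j => L j == R j) (iota 0 k.+1).
Proof. by rewrite walk_all size_w. Qed.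
Lemma pk : (p == k) = false. Proof. by have := p_lt; lia. Qed.
Lemma kp : (k == p) = false. Proof. by have := p_lt; lia. Qed.
Lemma ep' : nth a w p = a. Proof. exact: ep. Qed.

Lemma walkC j : 0 < j <= k ->
  walk (src_low src tgt a (e j.-1)) (tgt_low src tgt a (e j.-1)) s w t =
  all (fun j' => (if j' == j then tgt a else L j') == (if j' == p then tgt a else R j'))
      (iota 0 k.+1).
Proof.
case/andP=> hj0 hjk.
rewrite walk_all size_w; apply: eq_in_all => j'; rewrite mem_iota add0n => /andP[_ hj'].
congr eq_op.
- rewrite /L /Lf; case: j' hj' => [|i] hi.
    by have -> : (0 == j) = false by lia.
  rewrite /tgt_low ea ?e_inj; try lia.
  have -> : (i == j.-1) = (i.+1 == j) by lia.
  by case: (i =P p) => [->|]; rewrite ?ep'; case: ifP.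
- rewrite RE /Rf size_w /src_low; case: (j' =P k) => [->|hk]; first by rewrite kp.
  by rewrite ea; try lia.
Qed.

Lemma walkC0 :
  walk (src_loop src tgt a) (tgt_loop src tgt a) (tgt a) w t =
  all (fun j' => (if j' == 0 then tgt a else L j') == (if j' == p then tgt a else R j'))
      (iota 0 k.+1).
Proof.
rewrite walk_all size_w; apply: eq_in_all => j'; rewrite mem_iota add0n => /andP[_ hj'].
congr eq_op.
- rewrite /L /Lf; case: j' hj' => [|i] hi //.
  rewrite /tgt_loop ea; try lia.
  by case: (i =P p) => [->|]; rewrite ?ep'.
- rewrite RE /Rf size_w /src_loop; case: (j' =P k) => [->|hk]; first by rewrite kp.
  by rewrite ea; try lia.
Qed.

Lemma walkD j : j < k ->
  walk (src_up src tgt a (e j)) (tgt_up src tgt a (e j)) s w t =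
  all (fun j' => L j' == (if j' == p then tgt a else if j' == j then src a else R j'))
      (iota 0 k.+1).
Proof.
move=> hjk.
rewrite walk_all size_w; apply: eq_in_all => j'; rewrite mem_iota add0n => /andP[_ hj'].
congr eq_op.
- rewrite /L /Lf; case: j' hj' => [|i] hi //.
  rewrite /tgt_up ea; try lia.
  by case: (i =P p) => [->|]; rewrite ?ep'.
- rewrite RE /Rf size_w /src_up; case: (j' =P k) => [->|hk].
    by rewrite kp; have -> : (k == j) = false by lia.
  by rewrite ea ?e_inj; try lia.
Qed.

Lemma walkDk :
  walk (src_loop src tgt a) (tgt_loop src tgt a) s w (src a) =
  all (fun j' => L j' == (if j' == p then tgt a else if j' == k then src a else R j'))
      (iota 0 k.+1).
Proof.
rewrite walk_all size_w; apply: eq_in_all => j'; rewrite mem_iota add0n => /andP[_ hj'].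
congr eq_op.
- rewrite /L /Lf; case: j' hj' => [|i] hi //.
  rewrite /tgt_loop ea; try lia.
  by case: (i =P p) => [->|]; rewrite ?ep'.
- rewrite RE /Rf size_w /src_loop; case: (j' =P k) => [->|hk]; first by rewrite kp.
  by rewrite ea; try lia.
Qed.

Definition TC (j : nat) : bool :=
  if j is i.+1 then (tgt (e i) == src a) &&
     walk (src_low src tgt a (e i)) (tgt_low src tgt a (e i)) s w t
  else (s == src a) && walk (src_loop src tgt a) (tgt_loop src tgt a) (tgt a) w t.
Definition TD (j : nat) : bool :=
  if j == k then (t == tgt a) && walk (src_loop src tgt a) (tgt_loop src tgt a) s w (src a)
  else (src (e j) == tgt a) && walk (src_up src tgt a (e j)) (tgt_up src tgt a (e j)) s w t.

Lemma TCE j : j <= k -> TC j = (L j == src a) &&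
  all (fun j' => (if j' == j then tgt a else L j') == (if j' == p then tgt a else R j'))
      (iota 0 k.+1).
Proof.
case: j => [|i] hi; first by rewrite /TC walkC0.
have := walkC (j := i.+1); rewrite /= => ->; last by lia.
by [].
Qed.

Lemma TDE j : j <= k -> TD j = (R j == tgt a) &&
  all (fun j' => L j' == (if j' == p then tgt a else if j' == j then src a else R j'))
      (iota 0 k.+1).
Proof.
move=> hj; rewrite /TD RE; case: (j =P k) => [->|hk]; first by rewrite walkDk.
by rewrite walkD //; lia.
Qed.

Hypothesis hsa : src a != tgt a.

Lemma TC_TD j : j <= k -> j != p -> TC j = TD j.
Proof.
move=> hj hjp; rewrite TCE // TDE //.
have jin : j \in iota 0 k.+1 by rewrite mem_iota; lia.
case hL: (L j == src a); case hR: (R j == tgt a); rewrite ?andTb ?andFb //.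
- apply: eq_in_all => x _.
  by case: (x =P j) => [->|hxj] //; rewrite (negbTE hjp) (eqP hL) (eqP hR) !eqxx.
- apply/negbTE/allPn; exists j => //.
  by rewrite eqxx (negbTE hjp) eq_sym hR.
- apply/esym/negbTE/allPn; exists j => //.
  by rewrite eqxx (negbTE hjp) hL.
Qed.

Lemma TCp : TC p = walk src tgt s w t.
Proof.
rewrite TCE; last by have := p_lt; lia.
rewrite walkG.
have pin : p \in iota 0 k.+1 by rewrite mem_iota; have := p_lt; lia.
have Rp : R p = src a by rewrite RE pk ep.
case hL: (L p == src a); rewrite ?andTb ?andFb.
- apply: eq_in_all => x _.
  by case: (x =P p) => [->|hxp]; rewrite ?eqxx // Rp hL.
- apply/esym/negbTE/allPn; exists p => //.
  by rewrite Rp hL.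
Qed.

Lemma TDp : TD p = false.
Proof.
rewrite TDE; last by have := p_lt; lia.
by rewrite RE pk ep (negbTE hsa).
Qed.

Lemma pointwise : (walk src tgt s w t : nat) + \sum_(j < k.+1) (TD j : nat)
  = \sum_(j < k.+1) (TC j : nat).
Proof.
have pk1 : p < k.+1 by have := p_lt; lia.
rewrite [in RHS](bigD1 (Ordinal pk1)) //= [in LHS](bigD1 (Ordinal pk1)) //= TCp TDp add0n.
congr addn; apply: eq_bigr => j hj; rewrite TC_TD //; first by have := ltn_ord j; lia.
Qed.

Lemma sumTC : \sum_(j < k.+1) (TC j : nat) =
  ((s == src a) && walk (src_loop src tgt a) (tgt_loop src tgt a) (tgt a) w t : nat)
  + \sum_(c | tgt c == src a) (walk (src_low src tgt a c) (tgt_low src tgt a c) s w t : nat).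
Proof.
rewrite big_ord_recl /=; congr addn.
rewrite [RHS](reindex_inj (@perm_inj _ sigma)) [RHS]big_mkcond /=.
apply: eq_bigr => i _; rewrite add0n eE.
by case: (tgt (sigma i) == src a).
Qed.

Lemma sumTD : \sum_(j < k.+1) (TD j : nat) =
  \sum_(d | src d == tgt a) (walk (src_up src tgt a d) (tgt_up src tgt a d) s w t : nat)
  + ((t == tgt a) && walk (src_loop src tgt a) (tgt_loop src tgt a) s w (src a) : nat).
Proof.
rewrite big_ord_recr /= /TD eqxx; congr addn.
rewrite [RHS](reindex_inj (@perm_inj _ sigma)) [RHS]big_mkcond /=.
apply: eq_bigr => i _.
have -> : (widen_ord (leqnSn k) i == k :> nat) = false by have := ltn_ord i; rewrite /=; lia.
rewrite eE. by case: (src (sigma i) == tgt a).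
Qed.

End Pf.

Section Main.
Variables (V : finType) (k : nat) (src tgt : 'I_k -> V) (s t : V) (a : 'I_k)
  (B : {set 'I_k}).

Definition F (sigma : 'S_k) : int := (sgn_perm sigma * sgn_seq (sigma_M sigma B))%R.

Lemma SsumE (sr tg : 'I_k -> V) x y :
  Ssum sr tg x y B = (\sum_sigma ((eulerian_trail sr tg x y sigma : nat)%:R * F sigma))%R.
Proof.
rewrite /Ssum big_mkcond; apply: eq_bigr => sigma _; rewrite inE.
by case: eulerian_trail; rewrite ?mul1r ?mul0r.
Qed.

Lemma Sif (b : bool) (sr tg : 'I_k -> V) x y :
  (if b then Ssum sr tg x y B else 0)%R =
  (\sum_sigma ((b && eulerian_trail sr tg x y sigma : nat)%:R * F sigma))%R.
Proof.
case: b; first by rewrite SsumE.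
by rewrite big1 // => sigma _; rewrite mul0r.
Qed.

Lemma Ssums (P : pred 'I_k) (sr tg : 'I_k -> 'I_k -> V) x y :
  (\sum_(c | P c) Ssum (sr c) (tg c) x y B =
  \sum_sigma ((\sum_(c | P c) (eulerian_trail (sr c) (tg c) x y sigma : nat))%:R * F sigma))%R.
Proof.
under eq_bigr do rewrite SsumE.
rewrite exchange_big /=; apply: eq_bigr => sigma _.
by rewrite natr_sum mulr_suml.
Qed.

Lemma main : src a != tgt a ->
  Ssum src tgt s t B =
    ((\sum_(c | tgt c == src a) Ssum (src_low src tgt a c) (tgt_low src tgt a c) s t B
      + (if s == src a then Ssum (src_loop src tgt a) (tgt_loop src tgt a) (tgt a) t B
         else 0))
   - (\sum_(d | src d == tgt a) Ssum (src_up src tgt a d) (tgt_up src tgt a d) s t B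
      + (if t == tgt a then Ssum (src_loop src tgt a) (tgt_loop src tgt a) s (src a) B
         else 0)))%R.
Proof.
move=> hsa; apply/eqP; rewrite eq_sym subr_eq; apply/eqP.
rewrite (Ssums (fun c => tgt c == src a) (src_low src tgt a) (tgt_low src tgt a)).
rewrite (Ssums (fun d => src d == tgt a) (src_up src tgt a) (tgt_up src tgt a)).
rewrite !Sif SsumE -!big_split /=; apply: eq_bigr => sigma _.
rewrite -!mulrDl -!natrD; congr (_%:R * _)%R.
have := pointwise s t sigma hsa.
rewrite sumTC // sumTD // /eulerian_trail /w => ->.
exact: addnC.
Qed.
End Main.

(* The sum over c in A^* with c^+ = a^- splits into the c in A with
   tgt c = src a, plus c = a_0 exactly when s = a^- (a_0^+ = s, while
   a_{4n}^+ = r is a new vertex).  Symmetrically for d in A^* with d^- = a^+. *)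
Theorem lemma4p5 (n : nat) (V : finType)
    (src tgt : 'I_(4 * n - 1) -> V) (s t : V)
    (B : {set 'I_(4 * n - 1)}) (a : 'I_(4 * n - 1)) :
  (2 <= n)%N -> #|V| = n -> (#|B| <= 3)%N -> src a != tgt a ->
  Ssum src tgt s t B =
    ((\sum_(c | tgt c == src a) Ssum (src_low src tgt a c) (tgt_low src tgt a c) s t B
      + (if s == src a then Ssum (src_loop src tgt a) (tgt_loop src tgt a) (tgt a) t B
         else 0))
   - (\sum_(d | src d == tgt a) Ssum (src_up src tgt a d) (tgt_up src tgt a d) s t B
      + (if t == tgt a then Ssum (src_loop src tgt a) (tgt_loop src tgt a) s (src a) B
         else 0)))%R.
Proof.
move=> _ _ _ hsa.
exact: main.
Qed.
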